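(* Suppose that the comparison equation $(-\Delta+V^0)\phi=0$ has a solution basis $\phi^\pm$ such that $\lim_{n \to \infty}\phi_n^- = 0$, $|\phi_n^+|$ is monotonically nondecreasing for sufficiently large $n$, and $\beta_n := (V_n - V^0_n)/W$ satisfies $\beta_n (1 + |\phi_n^+ \phi_n^-|^2) \in\ell^1$. Then for $N$ sufficiently large, ${\cal M}$ is a contraction on ${\cal B}_N$. Consequently, there exists a unique solution $\psi^-$ of $(-\Delta+V)\psi=0$ such that $\psi_n^- = a_n^+ \phi_n^+ + a_n^- \phi_n^-$, where $\lim_{n \to \infty}{a_n^+} = 0$ and $\lim_{n \to \infty}{a_n^-} = 1$. Moreover, if we define $\widehat{\psi}_n^- := \max_{m \ge n}{|\phi_m^-|}$, then $\psi_n^- = \phi_n^- + r_n \widehat{\psi}_n^-$, with $\lim_{n \to \infty}{r_n} = 0$.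
   Context: On the positive integers, $(\Delta f)_n = f_{n+1}+f_{n-1}-2f_n$, and one considers $(-\Delta+V)\psi=0$ and the comparison equation $(-\Delta+V^0)\phi=0$ with real potentials $V_n, V^0_n$. For independent solutions $\phi^\pm$ of the comparison equation, $W = \phi^-_n\phi^+_{n+1}-\phi^-_{n+1}\phi^+_n$ is their (constant) Wronskian and $\beta_n = (V_n-V^0_n)/W$. Solutions of $(-\Delta+V)\psi=0$ are written $\psi_n = a_n^+\phi_n^+ + a_n^-\phi_n^-$ with variable coefficients. The weighted Banach space is ${\cal B}_N=\{\mathbf{X}=(X^+_n,X^-_n)^T : \|\mathbf{X}\|_N := \sup_{n\ge N}(|(\phi^+_n)^2X^+_n|+|X^-_n|)<\infty\}$, and ${\cal M}$ is the linear operator $({\cal M}\mathbf{X})_n := \sum_{k=0}^\infty \beta_{n+k}\begin{pmatrix}\phi^+_{n+k}\phi^-_{n+k} & (\phi^-_{n+k})^2\\ -(\phi^+_{n+k})^2 & -\phi^+_{n+k}\phi^-_{n+k}\end{pmatrix}\mathbf{X}_{n+k}$; the coefficient vector $\mathbf{a}=(a^+_n,a^-_n)^T$ solves $\mathbf{a} = (0,1)^T - {\cal M}\mathbf{a}$. *)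

(* Defs.v *)
From Stdlib Require Import Reals Lra Lia.
From Coquelicot Require Import Coquelicot.
Open Scope R_scope.

(* Sequences are functions nat -> R; the equation is imposed at every
   positive integer n >= 1, the value at 0 playing the role of the boundary
   value needed by Delta at n = 1. *)

Definition Delta (f : nat -> R) (n : nat) : R :=
  f (S n) + f (pred n) - 2 * f n.

Definition is_sol (V : nat -> R) (psi : nat -> R) : Prop :=
  forall n : nat, (1 <= n)%nat -> - Delta psi n + V n * psi n = 0.

Definition Wr (phip phim : nat -> R) (n : nat) : R :=
  phim n * phip (S n) - phim (S n) * phip n.

Definition W (phip phim : nat -> R) : R := Wr phip phim 1.

Definition beta (V V0 phip phim : nat -> R) (n : nat) : R :=
  (V n - V0 n) / W phip phim.

Definition wt (phip : nat -> R) (Xp Xm : nat -> R) (n : nat) : R :=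
  Rabs ((phip n) ^ 2 * Xp n) + Rabs (Xm n).

Definition inB (phip : nat -> R) (N : nat) (Xp Xm : nat -> R) : Prop :=
  exists B : R, forall n : nat, (N <= n)%nat -> wt phip Xp Xm n <= B.

Definition normB (phip : nat -> R) (N : nat) (Xp Xm : nat -> R) : R :=
  real (Sup_seq (fun k => Finite (wt phip Xp Xm (N + k)%nat))).

Definition Mterm_p (V V0 phip phim Xp Xm : nat -> R) (n k : nat) : R :=
  beta V V0 phip phim (n + k)%nat *
    (phip (n + k)%nat * phim (n + k)%nat * Xp (n + k)%nat + (phim (n + k)%nat) ^ 2 * Xm (n + k)%nat).

Definition Mterm_m (V V0 phip phim Xp Xm : nat -> R) (n k : nat) : R :=
  beta V V0 phip phim (n + k)%nat *
    (- (phip (n + k)%nat) ^ 2 * Xp (n + k)%nat - phip (n + k)%nat * phim (n + k)%nat * Xm (n + k)%nat).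

Definition Mp (V V0 phip phim Xp Xm : nat -> R) (n : nat) : R :=
  Series (Mterm_p V V0 phip phim Xp Xm n).

Definition Mm (V V0 phip phim Xp Xm : nat -> R) (n : nat) : R :=
  Series (Mterm_m V V0 phip phim Xp Xm n).

(* M is a (well-defined) contraction on B_N: for X in B_N the defining
   series converge at every n >= N, M X lies in B_N, and
   ||M X||_N <= c ||X||_N for a fixed c < 1 (M is linear). *)
Definition is_contraction_on_B (V V0 phip phim : nat -> R) (N : nat) : Prop :=
  exists c : R, 0 <= c < 1 /\
    forall Xp Xm : nat -> R, inB phip N Xp Xm ->
      (forall n : nat, (N <= n)%nat ->
          ex_series (Mterm_p V V0 phip phim Xp Xm n) /\
          ex_series (Mterm_m V V0 phip phim Xp Xm n)) /\
      inB phip N (Mp V V0 phip phim Xp Xm) (Mm V V0 phip phim Xp Xm) /\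
      normB phip N (Mp V V0 phip phim Xp Xm) (Mm V V0 phip phim Xp Xm)
        <= c * normB phip N Xp Xm.

Definition fixed_eq (V V0 phip phim : nat -> R) (N : nat) (ap am : nat -> R) : Prop :=
  forall n : nat, (N <= n)%nat ->
    ap n = 0 - Mp V V0 phip phim ap am n /\
    am n = 1 - Mm V V0 phip phim ap am n.

Definition good_coeffs (V V0 phip phim psi : nat -> R) (N : nat) (ap am : nat -> R) : Prop :=
  inB phip N ap am /\
  fixed_eq V V0 phip phim N ap am /\
  (forall n : nat, (N <= n)%nat -> psi n = ap n * phip n + am n * phim n) /\
  is_lim_seq ap 0 /\ is_lim_seq am 1.

Definition hatpsi (phim : nat -> R) (n : nat) : R :=
  real (Sup_seq (fun k => Finite (Rabs (phim (n + k)%nat)))).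

(* Main.v *)
From Stdlib Require Import Reals Lra Lia.
From Coquelicot Require Import Coquelicot.
Require Import Defs.
Open Scope R_scope.

Lemma series_bound (a c : nat -> R) : ex_series c -> (forall k, Rabs (a k) <= c k) ->
  ex_series a /\ Rabs (Series a) <= Series c.
Proof.
  intros Hc Hb.
  assert (Ha : ex_series (fun k => Rabs (a k))).
  { apply (@ex_series_le R_AbsRing R_CompleteNormedModule) with c; [|exact Hc]. intro k. change (Rabs (Rabs (a k)) <= c k).
    rewrite Rabs_Rabsolu. apply Hb. }
  split. { now apply ex_series_Rabs. }
  eapply Rle_trans. { apply Series_Rabs. exact Ha. }
  apply Series_le; [|exact Hc]. intro k; split; [apply Rabs_pos|apply Hb].
Qed.

Lemma lim_of_bound (u e : nat -> R) (l : R) : is_lim_seq e 0 ->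
  (exists N, forall n, (N <= n)%nat -> Rabs (u n - l) <= e n) -> is_lim_seq u l.
Proof.
  intros He [N HN]. apply is_lim_seq_spec. apply is_lim_seq_spec in He.
  intro eps. destruct (He eps) as [N2 H2]. exists (max N N2). intros n Hn.
  specialize (HN n ltac:(lia)). specialize (H2 n ltac:(lia)).
  rewrite Rminus_0_r in H2. eapply Rle_lt_trans. exact HN. eapply Rle_lt_trans. apply Rle_abs. exact H2.
Qed.

Lemma half_pow_pos j : 0 < (/2)^j.
Proof. apply pow_lt; lra. Qed.

Lemma half_pow_lim : is_lim_seq (fun j => (/2)^j) 0.
Proof. apply is_lim_seq_geom. rewrite Rabs_pos_eq; lra. Qed.

Lemma geom_cauchy (u : nat -> R) (K : R) :
  (forall j, Rabs (u (S j) - u j) <= K * (/2)^j) ->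
  exists l : R, is_lim_seq u l /\ forall j, Rabs (u j - l) <= 2*K*(/2)^j.
Proof.
  intros H.
  assert (HK : 0 <= K).
  { specialize (H 0%nat). simpl in H. pose proof (Rabs_pos (u 1%nat - u 0%nat)). lra. }
  assert (Htel : forall j i, Rabs (u (i + j)%nat - u j) <= 2*K*(/2)^j*(1 - (/2)^i)).
  { intros j i. induction i.
    - simpl. rewrite Rminus_diag, Rabs_R0. lra.
    - replace (S i + j)%nat with (S (i + j)) by lia.
      eapply Rle_trans.
      { replace (u (S (i+j)) - u j) with ((u (S (i+j)) - u (i+j)%nat) + (u (i+j)%nat - u j)) by ring.
        apply Rabs_triang. }
      pose proof (H (i+j)%nat) as Hi. rewrite pow_add in Hi.
      simpl. pose proof (half_pow_pos i). pose proof (half_pow_pos j). nra. }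
  assert (Hc : ex_lim_seq_cauchy u).
  { intro eps. pose proof half_pow_lim as Hl. apply is_lim_seq_spec in Hl.
    assert (Hp : 0 < eps / (4*K+1)). { apply Rdiv_lt_0_compat. apply cond_pos. lra. }
    destruct (Hl (mkposreal _ Hp)) as [N HN]. exists N. intros n k Hn Hk.
    specialize (HN N (le_n _)). simpl in HN. rewrite Rminus_0_r, Rabs_pos_eq in HN by (apply Rlt_le, half_pow_pos).
    pose proof (half_pow_pos N).
    assert (Hb : forall q, (N <= q)%nat -> Rabs (u q - u N) <= 2*K*(/2)^N).
    { intros q Hq. replace q with ((q - N) + N)%nat by lia. eapply Rle_trans. apply Htel.
      pose proof (half_pow_pos (q-N)). assert (0 <= K*(/2)^N) by nra. nra. }
    replace (u n - u k) with ((u n - u N) - (u k - u N)) by ring.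
    eapply Rle_lt_trans. apply Rabs_triang. rewrite Rabs_Ropp.
    pose proof (Hb n Hn). pose proof (Hb k Hk).
    assert (Hm : (4*K+1) * (/2)^N < (4*K+1) * (eps/(4*K+1))) by (apply Rmult_lt_compat_l; lra).
    replace ((4*K+1) * (eps/(4*K+1))) with (eps:R) in Hm by (field; lra). lra. }
  apply ex_lim_seq_cauchy_corr in Hc. destruct Hc as [l Hl]. exists l. split; [exact Hl|].
  intro j.
  apply (is_lim_seq_incr_n _ j) in Hl.
  assert (Hl2 : is_lim_seq (fun i => Rabs (u (i + j)%nat - u j)) (Rabs (l - u j))).
  { apply (is_lim_seq_abs _ (l - u j)). apply is_lim_seq_minus'. exact Hl. apply is_lim_seq_const. }
  rewrite Rabs_minus_sym.
  assert (Hb : forall i, Rabs (u (i + j)%nat - u j) <= 2*K*(/2)^j).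
  { intro i. eapply Rle_trans. apply Htel. pose proof (half_pow_pos i). pose proof (half_pow_pos j).
    assert (0 <= K*(/2)^j) by nra. nra. }
  exact (is_lim_seq_le _ _ _ _ Hb Hl2 (is_lim_seq_const (2*K*(/2)^j))).
Qed.

Lemma sup_fin (u : nat -> R) (B : R) : (forall k, u k <= B) ->
  exists s, Sup_seq (fun k => Finite (u k)) = Finite s /\ (forall k, u k <= s) /\ s <= B.
Proof.
  intros H.
  assert (H1 : Rbar_le (Sup_seq (fun k => Finite (u k))) (Finite B)).
  { apply (proj2 (is_sup_seq_lub _ _ (Sup_seq_correct _))). intros x [n ->]. simpl. apply H. }
  assert (H2 : forall k, Rbar_le (u k) (Sup_seq (fun k => Finite (u k)))).
  { intro k. apply Sup_seq_minor_le with k. simpl. lra. }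
  destruct (Sup_seq (fun k => Finite (u k))) as [s| |] eqn:E.
  - exists s. split; [reflexivity|]. split. intro k. exact (H2 k). exact H1.
  - simpl in H1. contradiction.
  - specialize (H2 0%nat). simpl in H2. contradiction.
Qed.

Lemma ex_series_scal_R (c : R) (a : nat -> R) : ex_series a -> ex_series (fun k => c * a k).
Proof. intro H. exact (@ex_series_scal_l R_AbsRing R_NormedModule c a H). Qed.

Lemma lim_geom_c (c : R) : is_lim_seq (fun j => c * (/2)^j) 0.
Proof.
  replace (Finite 0) with (Rbar_mult c 0) by (simpl; f_equal; ring).
  apply is_lim_seq_scal_l. apply half_pow_lim.
Qed.

Lemma lim_uniq (u : nat -> R) (l1 l2 : R) : is_lim_seq u l1 -> is_lim_seq u l2 -> l1 = l2.
Proof.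
  intros H1 H2. apply is_lim_seq_unique in H1. apply is_lim_seq_unique in H2.
  rewrite H1 in H2. injection H2. auto.
Qed.

Ltac pos := repeat (apply Rplus_le_le_0_compat || apply Rmult_le_pos || apply pow_le); try assumption; try lra.

Lemma term_p_bound (pn a c s t be B : R) :
  Rabs pn <= Rabs a -> Rabs (a^2 * s) + Rabs t <= B ->
  Rabs (pn^2 * (be * (a * c * s + c^2 * t))) <= 3/2 * B * Rabs (be * (1 + Rabs (a*c)^2)).
Proof.
  intros H1 H2.
  rewrite !Rabs_mult in *. rewrite (Rabs_pos_eq (1 + _)) by (pose proof (pow2_ge_0 (Rabs a * Rabs c)); lra).
  rewrite <- !RPow_abs in *.
  pose proof (Rabs_pos pn). pose proof (Rabs_pos a). pose proof (Rabs_pos c). pose proof (Rabs_pos s).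
  pose proof (Rabs_pos t). pose proof (Rabs_pos be).
  set (P := Rabs pn) in *. set (A := Rabs a) in *. set (C := Rabs c) in *. set (S := Rabs s) in *.
  set (T := Rabs t) in *. set (Bt := Rabs be) in *.
  assert (E1 : Rabs (a*c*s + c^2*t) <= A*C*S + C^2*T).
  { eapply Rle_trans. apply Rabs_triang. rewrite !Rabs_mult, <- !RPow_abs. unfold A, C, S, T. lra. }
  clearbody P A C S T Bt.
  assert (HP : P^2 <= A^2) by nra.
  assert (E2 : P^2 * (A*C*S + C^2*T) <= (A^2*S)*(A*C) + (A*C)^2 * T).
  { assert (0 <= A*C*S + C^2*T) by pos. 
    apply Rle_trans with (A^2 * (A*C*S + C^2*T)). apply Rmult_le_compat_r; lra. right; ring. }
  assert (HB1 : A^2*S <= B) by lra. assert (0 <= A^2*S) by pos. assert (HB2 : T <= B) by lra.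
  assert (E3 : (A^2*S)*(A*C) + (A*C)^2 * T <= B * (A*C) + (A*C)^2 * B).
  { assert (0 <= A*C) by pos. assert (0 <= (A*C)^2) by pos. apply Rplus_le_compat; apply Rmult_le_compat; nra. }
  assert (E4 : B * (A*C) + (A*C)^2 * B <= 3/2 * B * (1 + (A*C)^2)).
  { assert (0 <= B) by lra. pose proof (pow2_ge_0 (A*C - 1)). assert (A*C <= 1/2 * (1 + (A*C)^2)) by nra.
    replace (B * (A*C) + (A*C)^2 * B) with (B * (A*C + (A*C)^2)) by ring.
    replace (3/2 * B * (1 + (A*C)^2)) with (B * (3/2 * (1 + (A*C)^2))) by ring.
    apply Rmult_le_compat_l; lra. }
  apply Rle_trans with (P^2 * Bt * (A*C*S + C^2*T)).
  { replace (P^2 * (Bt * Rabs (a*c*s + c^2*t))) with (P^2 * Bt * Rabs (a*c*s + c^2*t)) by ring.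
    apply Rmult_le_compat_l. nra. exact E1. }
  replace (3/2 * B * (Bt * (1 + (A*C)^2))) with (Bt * (3/2 * B * (1 + (A*C)^2))) by ring.
  replace (P^2 * Bt * (A*C*S + C^2*T)) with (Bt * (P^2 * (A*C*S + C^2*T))) by ring.
  apply Rmult_le_compat_l. lra. lra.
Qed.

Lemma term_m_bound (a c s t be B : R) :
  Rabs (a^2 * s) + Rabs t <= B ->
  Rabs (be * (- a ^ 2 * s - a * c * t)) <= 3/2 * B * Rabs (be * (1 + Rabs (a*c)^2)).
Proof.
  intros H2.
  assert (E1 : Rabs (- a ^ 2 * s - a * c * t) <= Rabs (a^2*s) + Rabs (a*c) * Rabs t).
  { rewrite <- Rabs_mult. replace (- a ^ 2 * s - a * c * t) with (- (a^2*s) + - (a*c*t)) by ring.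
    eapply Rle_trans. apply Rabs_triang. rewrite !Rabs_Ropp. right. f_equal. }
  rewrite Rabs_mult, (Rabs_mult be (1 + _)).
  rewrite (Rabs_pos_eq (1 + _)) by (pose proof (pow2_ge_0 (Rabs (a * c))); lra).
  pose proof (Rabs_pos (a*c)). pose proof (Rabs_pos t). pose proof (Rabs_pos be). pose proof (Rabs_pos (a^2*s)).
  set (x := Rabs (a*c)) in *. set (u := Rabs (a^2*s)) in *. set (v := Rabs t) in *. set (Bt := Rabs be) in *.
  set (y := Rabs (- a ^ 2 * s - a * c * t)) in *. clearbody x u v Bt y.
  assert (E2 : u + x * v <= B * (1 + x)) by nra.
  pose proof (pow2_ge_0 (x - 1)).
  assert (E3 : B * (1 + x) <= 3/2 * B * (1 + x^2)).
  { replace (3/2 * B * (1 + x^2)) with (B * (3/2 * (1 + x^2))) by ring. apply Rmult_le_compat_l; nra. }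
  replace (3/2 * B * (Bt * (1 + x^2))) with (Bt * (3/2 * B * (1 + x^2))) by ring.
  apply Rmult_le_compat_l; lra.
Qed.

Definition gg (V V0 p m : nat -> R) k := Rabs (beta V V0 p m k * (1 + Rabs (p k * m k)^2)).
Definition TT (V V0 p m : nat -> R) n := Series (fun k => gg V V0 p m (n + k)%nat).

Lemma ex_tail (f : nat -> R) n : ex_series f -> ex_series (fun k => f (n + k)%nat).
Proof. intro H. apply (ex_series_incr_n f n). exact H. Qed.

Lemma Mbound (V V0 p m : nat -> R) (N : nat) (Xp Xm : nat -> R) (B : R) :
  (forall n k, (N <= n)%nat -> (n <= k)%nat -> Rabs (p n) <= Rabs (p k)) ->
  (forall n, (N <= n)%nat -> p n <> 0) ->
  ex_series (gg V V0 p m) ->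
  (forall n, (N <= n)%nat -> wt p Xp Xm n <= B) ->
  forall n, (N <= n)%nat ->
  ex_series (Mterm_p V V0 p m Xp Xm n) /\ ex_series (Mterm_m V V0 p m Xp Xm n) /\
  Rabs (p n ^ 2 * Mp V V0 p m Xp Xm n) <= 3/2 * B * TT V V0 p m n /\
  Rabs (Mm V V0 p m Xp Xm n) <= 3/2 * B * TT V V0 p m n.
Proof.
  intros Hmon Hnz Hg HB n Hn.
  assert (Hc : ex_series (fun k => 3/2 * B * gg V V0 p m (n + k)%nat)).
  { apply (ex_series_scal_R (3/2*B)). apply ex_tail. exact Hg. }
  assert (HcS : Series (fun k => 3/2 * B * gg V V0 p m (n + k)%nat) = 3/2 * B * TT V V0 p m n).
  { apply Series_scal_l. }
  destruct (series_bound (fun k => p n ^ 2 * Mterm_p V V0 p m Xp Xm n k) _ Hc) as [E1 E2].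
  { intro k. unfold Mterm_p, gg. apply term_p_bound. apply Hmon; lia. apply (HB (n+k)%nat). lia. }
  destruct (series_bound (Mterm_m V V0 p m Xp Xm n) _ Hc) as [F1 F2].
  { intro k. unfold Mterm_m, gg. apply term_m_bound. apply (HB (n+k)%nat). lia. }
  rewrite HcS in E2, F2.
  split; [|split; [exact F1|split; [|exact F2]]].
  - apply (@ex_series_ext R_AbsRing R_NormedModule (fun k => / (p n ^ 2) * (p n ^ 2 * Mterm_p V V0 p m Xp Xm n k))).
    { intro k. simpl. pose proof (Hnz n Hn). field. auto. }
    apply (ex_series_scal_R (/ (p n ^ 2))). exact E1.
  - unfold Mp. rewrite <- Series_scal_l. exact E2.
Qed.

Lemma sol_eq (V f : nat -> R) n : - Delta f (S n) + V (S n) * f (S n) = 0 <->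
  f (S (S n)) = (2 + V (S n)) * f (S n) - f n.
Proof. unfold Delta. simpl. split; intro; lra. Qed.

Lemma ext_sol (V : nat -> R) (N : nat) : forall f : nat -> R,
  (forall n, (N + 1 <= n)%nat -> - Delta f n + V n * f n = 0) ->
  exists psi, is_sol V psi /\ forall n, (N <= n)%nat -> psi n = f n.
Proof.
  induction N as [|N IH]; intros f Hf.
  - exists f. split; [|auto]. intros n Hn. apply Hf. lia.
  - set (f1 := fun n => if Nat.eqb n N then (2 + V (S N)) * f (S N) - f (S (S N)) else f n).
    destruct (IH f1) as [psi [H1 H2]].
    + intros n Hn. destruct n as [|n]; [lia|]. apply sol_eq.
      destruct (Nat.eq_dec n N) as [->|Hne].
      * unfold f1. rewrite (proj2 (Nat.eqb_neq (S (S N)) N)) by lia.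
        rewrite (proj2 (Nat.eqb_neq (S N) N)) by lia. rewrite Nat.eqb_refl. ring.
      * unfold f1. rewrite (proj2 (Nat.eqb_neq (S (S n)) N)) by lia.
        rewrite (proj2 (Nat.eqb_neq (S n) N)) by lia. rewrite (proj2 (Nat.eqb_neq n N)) by lia.
        apply sol_eq. apply Hf. lia.
    + exists psi. split; [exact H1|]. intros n Hn. rewrite H2 by lia. unfold f1.
      rewrite (proj2 (Nat.eqb_neq n N)) by lia. reflexivity.
Qed.

Lemma back_uniq (V f g : nat -> R) (N : nat) : is_sol V f -> is_sol V g ->
  (forall n, (N <= n)%nat -> f n = g n) -> forall n, f n = g n.
Proof.
  intros Hf Hg. induction N as [|N IH]; intros H.
  - intro n. apply H. lia.
  - apply IH. intros n Hn. destruct (Nat.eq_dec n N) as [->|Hne]; [|apply H; lia].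
    pose proof (proj1 (sol_eq V f N) (Hf (S N) ltac:(lia))) as E1.
    pose proof (proj1 (sol_eq V g N) (Hg (S N) ltac:(lia))) as E2.
    rewrite (H (S N)), (H (S (S N))) in E1 by lia. lra.
Qed.

Lemma wt_nonneg p Xp Xm n : 0 <= wt p Xp Xm n.
Proof. unfold wt. pose proof (Rabs_pos (p n ^ 2 * Xp n)). pose proof (Rabs_pos (Xm n)). lra. Qed.

Lemma wt_tri p Xp Xm Yp Ym n :
  wt p Xp Xm n <= wt p Yp Ym n + wt p (fun k => Xp k - Yp k) (fun k => Xm k - Ym k) n.
Proof.
  unfold wt. replace (p n ^ 2 * Xp n) with (p n ^ 2 * Yp n + p n ^ 2 * (Xp n - Yp n)) by ring.
  replace (Xm n) with (Ym n + (Xm n - Ym n)) at 1 by ring.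
  pose proof (Rabs_triang (p n ^ 2 * Yp n) (p n ^ 2 * (Xp n - Yp n))).
  pose proof (Rabs_triang (Ym n) (Xm n - Ym n)). lra.
Qed.

Lemma wt_sub p Xp Xm Yp Ym n :
  wt p (fun k => Xp k - Yp k) (fun k => Xm k - Ym k) n <= wt p Xp Xm n + wt p Yp Ym n.
Proof.
  unfold wt. rewrite Rmult_minus_distr_l.
  pose proof (Rabs_triang (p n ^ 2 * Xp n) (- (p n ^ 2 * Yp n))).
  pose proof (Rabs_triang (Xm n) (- Ym n)). rewrite Rabs_Ropp in *.
  unfold Rminus. lra.
Qed.

Lemma M_lin (V V0 p m Xp Xm Yp Ym : nat -> R) n :
  ex_series (Mterm_p V V0 p m Xp Xm n) -> ex_series (Mterm_m V V0 p m Xp Xm n) ->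
  ex_series (Mterm_p V V0 p m Yp Ym n) -> ex_series (Mterm_m V V0 p m Yp Ym n) ->
  Mp V V0 p m Xp Xm n - Mp V V0 p m Yp Ym n = Mp V V0 p m (fun k => Xp k - Yp k) (fun k => Xm k - Ym k) n /\
  Mm V V0 p m Xp Xm n - Mm V V0 p m Yp Ym n = Mm V V0 p m (fun k => Xp k - Yp k) (fun k => Xm k - Ym k) n.
Proof.
  intros H1 H2 H3 H4. unfold Mp, Mm. split.
  - rewrite <- Series_minus by assumption. apply Series_ext. intro k. unfold Mterm_p. ring.
  - rewrite <- Series_minus by assumption. apply Series_ext. intro k. unfold Mterm_m. ring.
Qed.

Lemma term_h_bound (pn a c s t be h K : R) :
  Rabs pn <= Rabs a -> Rabs (a * s) <= h -> Rabs c <= h -> Rabs t <= K -> 0 <= K ->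
  Rabs (pn * (be * (a * c * s + c^2 * t))) <= (1 + K) * h * Rabs (be * (1 + Rabs (a*c)^2)).
Proof.
  intros H1 H2 H3 H4 HK.
  assert (E1 : Rabs (a*c*s + c^2*t) <= Rabs c * Rabs (a*s) + Rabs c ^ 2 * Rabs t).
  { eapply Rle_trans. apply Rabs_triang. rewrite !Rabs_mult, <- !RPow_abs. right; ring. }
  rewrite !Rabs_mult in *. rewrite (Rabs_pos_eq (1 + _)) by (pose proof (pow2_ge_0 (Rabs a * Rabs c)); lra).
  pose proof (Rabs_pos pn). pose proof (Rabs_pos a). pose proof (Rabs_pos c). pose proof (Rabs_pos s).
  pose proof (Rabs_pos t). pose proof (Rabs_pos be). pose proof (Rabs_pos (a * c * s + c ^ 2 * t)).
  set (P := Rabs pn) in *. set (A := Rabs a) in *. set (C := Rabs c) in *. set (S := Rabs s) in *.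
  set (T := Rabs t) in *. set (Bt := Rabs be) in *. set (Y := Rabs (a * c * s + c ^ 2 * t)) in *.
  clearbody P A C S T Bt Y.
  assert (0 <= h) by (pose proof (Rmult_le_pos A S); lra).
  assert (E2 : P * Y <= A * C * (h + C * T)).
  { apply Rle_trans with (A * (C * (A*S) + C^2 * T)).
    apply Rmult_le_compat; pos.
    replace (A * (C * (A*S) + C^2 * T)) with (A * C * (A*S + C * T)) by ring.
    apply Rmult_le_compat_l. pos. lra. }
  assert (E3 : A * C * (h + C * T) <= A * C * ((1 + K) * h)).
  { apply Rmult_le_compat_l. pos. assert (C * T <= h * K) by (apply Rmult_le_compat; pos). nra. }
  assert (E4 : A * C <= 1 + (A*C)^2) by (pose proof (pow2_ge_0 (A*C - 1)); nra).
  assert (E5 : A * C * ((1 + K) * h) <= (1 + K) * h * (1 + (A*C)^2)).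
  { rewrite Rmult_comm. apply Rmult_le_compat_l. pos. exact E4. }
  replace (P * (Bt * Y)) with (Bt * (P * Y)) by ring.
  replace ((1 + K) * h * (Bt * (1 + (A * C) ^ 2))) with (Bt * ((1 + K) * h * (1 + (A * C) ^ 2))) by ring.
  apply Rmult_le_compat_l. lra. lra.
Qed.

Lemma alg_step (A B p0 p1 p2 m0 m1 m2 a0 b0 a2 b2 q0 b1 V1 V01 Wv : R) :
  Wv <> 0 -> a0 = A - q0*m0 -> b0 = B + q0*p0 -> a2 = A + b1*(A*p1 + B*m1)*m1 ->
  b2 = B - b1*(A*p1 + B*m1)*p1 ->
  p2 = (2+V01)*p1 - p0 -> m2 = (2+V01)*m1 - m0 -> m1*p2 - m2*p1 = Wv -> b1 = (V1 - V01)/Wv ->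
  a2*p2 + b2*m2 = (2+V1)*(A*p1 + B*m1) - (a0*p0 + b0*m0).
Proof.
  intros HW H1 H2 H3 H4 H5 H6 H7 H8.
  assert (Hb : b1 * Wv = V1 - V01) by (rewrite H8; field; exact HW).
  subst a0 b0 a2 b2.
  assert (E : (A + b1 * (A * p1 + B * m1) * m1) * p2 + (B - b1 * (A * p1 + B * m1) * p1) * m2
     - ((2 + V1) * (A * p1 + B * m1) - ((A - q0 * m0) * p0 + (B + q0 * p0) * m0))
     = (A*p1 + B*m1) * (b1 * (m1*p2 - m2*p1) - (V1 - V01)) + A*(p2 - ((2+V01)*p1 - p0))
       + B*(m2 - ((2+V01)*m1 - m0))) by ring.
  rewrite H7, Hb, <- H5, <- H6 in E. lra.
Qed.

Lemma prefix_bound (u : nat -> R) (N : nat) : exists B, forall n, (n <= N)%nat -> u n <= B.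
Proof.
  induction N as [|N [B HB]].
  - exists (u 0%nat). intros n Hn. replace n with 0%nat by lia. lra.
  - exists (Rmax B (u (S N))). intros n Hn. destruct (Nat.eq_dec n (S N)) as [->|].
    + apply Rmax_r. + eapply Rle_trans. apply HB. lia. apply Rmax_l.
Qed.

Section Main.
Variables V V0 p m : nat -> R.
Hypothesis Hsolp : is_sol V0 p.
Hypothesis Hsolm : is_sol V0 m.
Hypothesis Hbasis : W p m <> 0.
Hypothesis Hlim : is_lim_seq m 0.
Hypothesis Hl1 : ex_series (gg V V0 p m).

Lemma Wr_step n : Wr p m (S n) = Wr p m n.
Proof.
  unfold Wr. rewrite (proj1 (sol_eq V0 p n) (Hsolp (S n) ltac:(lia))).
  rewrite (proj1 (sol_eq V0 m n) (Hsolm (S n) ltac:(lia))). ring.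
Qed.

Lemma Wr_const n : Wr p m n = W p m.
Proof.
  unfold W. induction n as [|n IH].
  - symmetry. apply Wr_step.
  - rewrite Wr_step. exact IH.
Qed.

Lemma m_bounded : exists Mb, forall n, Rabs (m n) <= Mb.
Proof.
  pose proof Hlim as H. apply is_lim_seq_spec in H. destruct (H (mkposreal 1 Rlt_0_1)) as [N HN].
  destruct (prefix_bound (fun n => Rabs (m n)) N) as [B HB].
  exists (Rmax B 1). intro n. destruct (Compare_dec.le_lt_dec n N).
  - eapply Rle_trans. apply HB. lia. apply Rmax_l.
  - specialize (HN n ltac:(lia)). simpl in HN. rewrite Rminus_0_r in HN. eapply Rle_trans. 2: apply Rmax_r. lra.
Qed.

Lemma hat_spec n : forall k, Rabs (m (n + k)%nat) <= hatpsi m n.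
Proof.
  destruct m_bounded as [Mb HM].
  destruct (sup_fin (fun k => Rabs (m (n + k)%nat)) Mb) as [s [E [H1 H2]]].
  { intro; apply HM. }
  unfold hatpsi. rewrite E. simpl. exact H1.
Qed.

Lemma hat_ge n i : (n <= i)%nat -> Rabs (m i) <= hatpsi m n.
Proof. intro H. replace i with (n + (i - n))%nat by lia. apply hat_spec. Qed.

Lemma hat_mono n i : (n <= i)%nat -> hatpsi m i <= hatpsi m n.
Proof.
  intro H.
  destruct (sup_fin (fun k => Rabs (m (i + k)%nat)) (hatpsi m n)) as [s [E [H1 H2]]].
  { intro k. apply hat_ge. lia. }
  unfold hatpsi at 1. rewrite E. simpl. exact H2.
Qed.

Lemma hat_pos n : 0 < hatpsi m n.
Proof.
  pose proof (Wr_const n) as HW. unfold Wr in HW.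
  destruct (Req_dec (m n) 0) as [E|E].
  - destruct (Req_dec (m (S n)) 0) as [E2|E2].
    + rewrite E, E2 in HW. exfalso. apply Hbasis. rewrite <- HW. ring.
    + eapply Rlt_le_trans. 2: apply (hat_ge n (S n)); lia. apply Rabs_pos_lt. exact E2.
  - eapply Rlt_le_trans. 2: apply (hat_ge n n); lia. apply Rabs_pos_lt. exact E.
Qed.

Lemma T_lim : is_lim_seq (TT V V0 p m) 0.
Proof.
  apply is_lim_seq_incr_1.
  apply is_lim_seq_ext with (fun n => Series (gg V V0 p m) - sum_f_R0 (gg V V0 p m) n).
  { intro n. unfold TT. rewrite (Series_incr_n _ (S n)) by (lia || exact Hl1). simpl. ring. }
  replace (Finite 0) with (Finite (Series (gg V V0 p m) - Series (gg V V0 p m))) by (f_equal; ring).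
  apply is_lim_seq_minus'. apply is_lim_seq_const.
  apply is_lim_seq_ext with (sum_n (gg V V0 p m)). { intro n. apply sum_n_Reals. }
  apply (Series_correct _ Hl1).
Qed.


Section Fixed.
Variable N : nat.
Hypothesis HmonN : forall n k, (N <= n)%nat -> (n <= k)%nat -> Rabs (p n) <= Rabs (p k).
Hypothesis HnzN : forall n, (N <= n)%nat -> p n <> 0.
Hypothesis HTN : forall n, (N <= n)%nat -> TT V V0 p m n <= 1/6.

Lemma MB (Xp Xm : nat -> R) (B : R) : (forall n, (N <= n)%nat -> wt p Xp Xm n <= B) ->
  forall n, (N <= n)%nat ->
  ex_series (Mterm_p V V0 p m Xp Xm n) /\ ex_series (Mterm_m V V0 p m Xp Xm n) /\
  Rabs (p n ^ 2 * Mp V V0 p m Xp Xm n) <= B / 4 /\ Rabs (Mm V V0 p m Xp Xm n) <= B / 4 /\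
  wt p (Mp V V0 p m Xp Xm) (Mm V V0 p m Xp Xm) n <= B / 2.
Proof.
  intros HB n Hn.
  assert (B0 : 0 <= B) by (eapply Rle_trans; [apply (wt_nonneg p Xp Xm N)|apply HB; lia]).
  destruct (Mbound V V0 p m N Xp Xm B HmonN HnzN Hl1 HB n Hn) as [E1 [E2 [E3 E4]]].
  pose proof (HTN n Hn).
  assert (3/2 * B * TT V V0 p m n <= B / 4).
  { replace (B/4) with (3/2 * B * (1/6)) by field. apply Rmult_le_compat_l. lra. exact H. }
  repeat split; try assumption; try lra. unfold wt. lra.
Qed.

Lemma contraction : is_contraction_on_B V V0 p m N.
Proof.
  exists (1/2). split; [lra|]. intros Xp Xm [B HB].
  destruct (sup_fin (fun k => wt p Xp Xm (N + k)%nat) B) as [s [E [H1 H2]]].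
  { intro k. apply HB. lia. }
  assert (Hs : forall n, (N <= n)%nat -> wt p Xp Xm n <= s).
  { intros n Hn. replace n with (N + (n - N))%nat by lia. apply H1. }
  pose proof (MB Xp Xm s Hs) as HM.
  split; [intros n Hn; split; apply (HM n Hn)|].
  destruct (sup_fin (fun k => wt p (Mp V V0 p m Xp Xm) (Mm V V0 p m Xp Xm) (N + k)%nat) (s/2)) as [s' [E' [H1' H2']]].
  { intro k. apply HM. lia. }
  split. { exists (s/2). intros n Hn. apply HM. exact Hn. }
  unfold normB. rewrite E, E'. simpl. lra.
Qed.

Fixpoint it (j : nat) : (nat -> R) * (nat -> R) :=
  match j with
  | O => (fun _ => 0, fun _ => 1)
  | S j => (fun n => 0 - Mp V V0 p m (fst (it j)) (snd (it j)) n,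
            fun n => 1 - Mm V V0 p m (fst (it j)) (snd (it j)) n)
  end.

Definition itp j := fst (it j).
Definition itm j := snd (it j).

Lemma itp_S j n : itp (S j) n = 0 - Mp V V0 p m (itp j) (itm j) n.
Proof. reflexivity. Qed.
Lemma itm_S j n : itm (S j) n = 1 - Mm V V0 p m (itp j) (itm j) n.
Proof. reflexivity. Qed.

Lemma I1 j : forall n, (N <= n)%nat -> wt p (itp j) (itm j) n <= 2.
Proof.
  induction j as [|j IH]; intros n Hn.
  - unfold wt, itp, itm. simpl. rewrite Rmult_0_r, Rabs_R0, Rabs_R1. lra.
  - destruct (MB _ _ 2 IH n Hn) as [_ [_ [E3 [E4 _]]]].
    unfold wt. rewrite itp_S, itm_S.
    replace (p n ^ 2 * (0 - Mp V V0 p m (itp j) (itm j) n)) with (- (p n ^ 2 * Mp V V0 p m (itp j) (itm j) n)) by ring.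
    rewrite Rabs_Ropp. pose proof (Rabs_triang 1 (- Mm V V0 p m (itp j) (itm j) n)).
    rewrite Rabs_Ropp, Rabs_R1 in H. unfold Rminus. lra.
Qed.

Lemma wt_m_le Xp Xm n B : wt p Xp Xm n <= B -> Rabs (Xm n) <= B.
Proof. unfold wt. pose proof (Rabs_pos (p n ^ 2 * Xp n)). lra. Qed.

Lemma wt_p_le Xp Xm n B : wt p Xp Xm n <= B -> Rabs (p n ^ 2 * Xp n) <= B.
Proof. unfold wt. pose proof (Rabs_pos (Xm n)). lra. Qed.

Lemma hat_M_bound (Xp Xm : nat -> R) (K : R) n : (N <= n)%nat -> 0 <= K ->
  ex_series (Mterm_p V V0 p m Xp Xm n) ->
  (forall i, (N <= i)%nat -> Rabs (p i * Xp i) <= hatpsi m i) ->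
  (forall i, (N <= i)%nat -> Rabs (Xm i) <= K) ->
  Rabs (p n * Mp V V0 p m Xp Xm n) <= (1 + K) * hatpsi m n * TT V V0 p m n.
Proof.
  intros Hn HK Hex Hh HX.
  assert (Hc : ex_series (fun k => (1 + K) * hatpsi m n * gg V V0 p m (n + k)%nat)).
  { apply ex_series_scal_R. apply ex_tail. exact Hl1. }
  destruct (series_bound (fun k => p n * Mterm_p V V0 p m Xp Xm n k) _ Hc) as [_ E].
  { intro k. unfold Mterm_p, gg. apply term_h_bound; try lra.
    - apply HmonN; lia.
    - eapply Rle_trans. apply Hh. lia. apply hat_mono. lia.
    - apply hat_ge. lia.
    - apply HX. lia. }
  unfold TT. rewrite <- Series_scal_l. unfold Mp. rewrite <- Series_scal_l. exact E.
Qed.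

Lemma I2 j : forall n, (N <= n)%nat -> Rabs (p n * itp j n) <= hatpsi m n.
Proof.
  induction j as [|j IH]; intros n Hn.
  - unfold itp. simpl. rewrite Rmult_0_r, Rabs_R0. apply Rlt_le, hat_pos.
  - rewrite itp_S.
    replace (p n * (0 - Mp V V0 p m (itp j) (itm j) n)) with (- (p n * Mp V V0 p m (itp j) (itm j) n)) by ring.
    rewrite Rabs_Ropp.
    eapply Rle_trans. apply (hat_M_bound _ _ 2 n Hn); try lra.
    + apply (MB _ _ 2 (I1 j) n Hn).
    + exact IH.
    + intros i Hi. apply (wt_m_le (itp j)). apply I1. exact Hi.
    + pose proof (hat_pos n). pose proof (HTN n Hn).
      apply Rle_trans with (3 * hatpsi m n * (1/6)). apply Rmult_le_compat_l; lra. lra.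
Qed.

Lemma wt_sym Xp Xm Yp Ym n :
  wt p (fun k => Xp k - Yp k) (fun k => Xm k - Ym k) n = wt p (fun k => Yp k - Xp k) (fun k => Ym k - Xm k) n.
Proof.
  unfold wt. replace (p n ^ 2 * (Xp n - Yp n)) with (- (p n ^ 2 * (Yp n - Xp n))) by ring.
  rewrite Rabs_Ropp, (Rabs_minus_sym (Xm n)). reflexivity.
Qed.

Lemma I3 j : forall n, (N <= n)%nat ->
  wt p (fun k => itp (S j) k - itp j k) (fun k => itm (S j) k - itm j k) n <= 4 * (/2)^j.
Proof.
  induction j as [|j IH]; intros n Hn.
  - eapply Rle_trans. apply wt_sub. pose proof (I1 1 n Hn). pose proof (I1 0 n Hn). simpl. lra.
  - destruct (MB _ _ 2 (I1 (S j)) n Hn) as [A1 [A2 _]].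
    destruct (MB _ _ 2 (I1 j) n Hn) as [B1 [B2 _]].
    destruct (M_lin V V0 p m (itp (S j)) (itm (S j)) (itp j) (itm j) n A1 A2 B1 B2) as [L1 L2].
    destruct (MB _ _ _ IH n Hn) as [_ [_ [_ [_ C5]]]].
    assert (Ep : itp (S (S j)) n - itp (S j) n =
       - Mp V V0 p m (fun k => itp (S j) k - itp j k) (fun k => itm (S j) k - itm j k) n).
    { rewrite (itp_S (S j) n), (itp_S j n). lra. }
    assert (Em : itm (S (S j)) n - itm (S j) n =
       - Mm V V0 p m (fun k => itp (S j) k - itp j k) (fun k => itm (S j) k - itm j k) n).
    { rewrite (itm_S (S j) n), (itm_S j n). lra. }
    unfold wt in *. cbv beta. rewrite Ep, Em, Ropp_mult_distr_r_reverse, !Rabs_Ropp.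
    change ((/2)^(S j)) with (/2 * (/2)^j). lra.
Qed.

Definition ap n := real (Lim_seq (fun j => itp j n)).
Definition am n := real (Lim_seq (fun j => itm j n)).

Lemma lim_p n : (N <= n)%nat ->
  is_lim_seq (fun j => itp j n) (ap n) /\ forall j, Rabs (p n ^ 2 * (itp j n - ap n)) <= 8 * (/2)^j.
Proof.
  intro Hn. pose proof (HnzN n Hn) as Hz. assert (Hp2 : 0 < p n ^ 2) by (apply pow2_gt_0; exact Hz).
  destruct (geom_cauchy (fun j => itp j n) (4 / p n ^ 2)) as [l [Hl Hb]].
  { intro j. pose proof (wt_p_le _ _ _ _ (I3 j n Hn)) as H. cbv beta in H.
    rewrite Rabs_mult, (Rabs_pos_eq (p n ^ 2)) in H by lra.
    apply Rmult_le_reg_l with (p n ^ 2). exact Hp2.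
    replace (p n ^ 2 * (4 / p n ^ 2 * (/ 2) ^ j)) with (4 * (/2)^j) by (field; lra). exact H. }
  assert (E : ap n = l). { unfold ap. rewrite (is_lim_seq_unique _ _ Hl). reflexivity. }
  rewrite E. split; [exact Hl|]. intro j. rewrite Rabs_mult, (Rabs_pos_eq (p n ^ 2)) by lra.
  specialize (Hb j). cbv beta in Hb.
  apply Rle_trans with (p n ^ 2 * (2 * (4 / p n ^ 2) * (/ 2) ^ j)).
  apply Rmult_le_compat_l; lra. right. field. lra.
Qed.

Lemma lim_m n : (N <= n)%nat ->
  is_lim_seq (fun j => itm j n) (am n) /\ forall j, Rabs (itm j n - am n) <= 8 * (/2)^j.
Proof.
  intro Hn.
  destruct (geom_cauchy (fun j => itm j n) 4) as [l [Hl Hb]].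
  { intro j. exact (wt_m_le _ _ _ _ (I3 j n Hn)). }
  assert (E : am n = l). { unfold am. rewrite (is_lim_seq_unique _ _ Hl). reflexivity. }
  rewrite E. split; [exact Hl|]. intro j. specialize (Hb j). cbv beta in Hb. lra.
Qed.

Lemma wt_it_a j n : (N <= n)%nat ->
  wt p (fun k => itp j k - ap k) (fun k => itm j k - am k) n <= 16 * (/2)^j.
Proof.
  intro Hn. unfold wt. pose proof (proj2 (lim_p n Hn) j). pose proof (proj2 (lim_m n Hn) j). lra.
Qed.

Lemma wt_a n : (N <= n)%nat -> wt p ap am n <= 18.
Proof.
  intro Hn. eapply Rle_trans. apply (wt_tri p ap am (itp 0) (itm 0)).
  rewrite wt_sym. pose proof (wt_it_a 0 n Hn). pose proof (I1 0 n Hn). simpl in *. lra.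
Qed.

Lemma a_hat n : (N <= n)%nat -> Rabs (p n * ap n) <= hatpsi m n.
Proof.
  intro Hn. destruct (lim_p n Hn) as [Hl _].
  assert (H2 : is_lim_seq (fun j => Rabs (p n * itp j n)) (Rabs (p n * ap n))).
  { apply (is_lim_seq_abs _ (p n * ap n)).
    replace (Finite (p n * ap n)) with (Rbar_mult (p n) (ap n)) by reflexivity.
    apply is_lim_seq_scal_l. exact Hl. }
  exact (is_lim_seq_le _ _ _ _ (fun j => I2 j n Hn) H2 (is_lim_seq_const _)).
Qed.

Lemma fixed_a : fixed_eq V V0 p m N ap am.
Proof.
  intros n Hn.
  pose proof (HnzN n Hn) as Hz. assert (Hp2 : 0 < p n ^ 2) by (apply pow2_gt_0; exact Hz).
  assert (Hd : forall j, Rabs (p n ^ 2 * (Mp V V0 p m (itp j) (itm j) n - Mp V V0 p m ap am n)) <= 4 * (/2)^j /\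
                         Rabs (Mm V V0 p m (itp j) (itm j) n - Mm V V0 p m ap am n) <= 4 * (/2)^j).
  { intro j.
    destruct (MB _ _ 2 (I1 j) n Hn) as [A1 [A2 _]].
    destruct (MB _ _ 18 wt_a n Hn) as [B1 [B2 _]].
    destruct (M_lin V V0 p m (itp j) (itm j) ap am n A1 A2 B1 B2) as [L1 L2].
    rewrite L1, L2.
    destruct (MB _ _ _ (fun k Hk => wt_it_a j k Hk) n Hn) as [_ [_ [C3 [C4 _]]]].
    split; lra. }
  split.
  - destruct (lim_p n Hn) as [Hl _]. apply is_lim_seq_incr_1 in Hl.
    apply (lim_uniq _ _ _ Hl). eapply is_lim_seq_ext. { intro j. symmetry. apply itp_S. }
    apply lim_of_bound with (fun j => 4 / p n ^ 2 * (/2)^j). apply lim_geom_c.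
    exists 0%nat. intros j _. destruct (Hd j) as [H1 _].
    rewrite Rabs_mult, (Rabs_pos_eq (p n ^ 2)) in H1 by lra.
    replace (0 - Mp V V0 p m (itp j) (itm j) n - (0 - Mp V V0 p m ap am n)) with
      (- (Mp V V0 p m (itp j) (itm j) n - Mp V V0 p m ap am n)) by ring.
    rewrite Rabs_Ropp. apply Rmult_le_reg_l with (p n ^ 2). exact Hp2.
    replace (p n ^ 2 * (4 / p n ^ 2 * (/ 2) ^ j)) with (4 * (/2)^j) by (field; lra). exact H1.
  - destruct (lim_m n Hn) as [Hl _]. apply is_lim_seq_incr_1 in Hl.
    apply (lim_uniq _ _ _ Hl). eapply is_lim_seq_ext. { intro j. symmetry. apply itm_S. }
    apply lim_of_bound with (fun j => 4 * (/2)^j). apply lim_geom_c.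
    exists 0%nat. intros j _. destruct (Hd j) as [_ H1].
    replace (1 - Mm V V0 p m (itp j) (itm j) n - (1 - Mm V V0 p m ap am n)) with
      (- (Mm V V0 p m (itp j) (itm j) n - Mm V V0 p m ap am n)) by ring.
    rewrite Rabs_Ropp. exact H1.
Qed.

Definition psi0 n := ap n * p n + am n * m n.

Lemma exa n : (N <= n)%nat -> ex_series (Mterm_p V V0 p m ap am n) /\ ex_series (Mterm_m V V0 p m ap am n).
Proof. intro Hn. destruct (MB _ _ 18 wt_a n Hn) as [A1 [A2 _]]. auto. Qed.

Lemma rel n : (N <= n)%nat ->
  ap n = ap (S n) - beta V V0 p m n * psi0 n * m n /\ am n = am (S n) + beta V V0 p m n * psi0 n * p n.
Proof.
  intro Hn. destruct (fixed_a n Hn) as [F1 F2]. destruct (fixed_a (S n) ltac:(lia)) as [F3 F4].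
  destruct (exa n Hn) as [E1 E2].
  unfold Mp, Mm in *. rewrite Series_incr_1 in F1 by exact E1. rewrite Series_incr_1 in F2 by exact E2.
  rewrite (Series_ext (fun k => Mterm_p V V0 p m ap am n (S k)) (Mterm_p V V0 p m ap am (S n))) in F1
    by (intro k; unfold Mterm_p; replace (n + S k)%nat with (S n + k)%nat by lia; reflexivity).
  rewrite (Series_ext (fun k => Mterm_m V V0 p m ap am n (S k)) (Mterm_m V V0 p m ap am (S n))) in F2
    by (intro k; unfold Mterm_m; replace (n + S k)%nat with (S n + k)%nat by lia; reflexivity).
  unfold Mterm_p, Mterm_m, psi0 in *. rewrite Nat.add_0_r in F1, F2. split; lra.
Qed.

Lemma psi0_sol n : (N + 1 <= n)%nat -> - Delta psi0 n + V n * psi0 n = 0.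
Proof.
  intro Hn. destruct n as [|k]; [lia|]. apply sol_eq.
  destruct (rel k ltac:(lia)) as [R1 R2]. destruct (rel (S k) ltac:(lia)) as [R3 R4].
  unfold psi0 at 1 2 3.
  apply alg_step with (A := ap (S k)) (B := am (S k)) (q0 := beta V V0 p m k * psi0 k)
     (b1 := beta V V0 p m (S k)) (V01 := V0 (S k)) (Wv := W p m).
  - exact Hbasis.
  - rewrite R1. ring.
  - rewrite R2. ring.
  - unfold psi0 in R3. lra.
  - unfold psi0 in R4. lra.
  - apply (sol_eq V0 p k). apply Hsolp. lia.
  - apply (sol_eq V0 m k). apply Hsolm. lia.
  - rewrite <- (Wr_const (S k)). unfold Wr. ring.
  - reflexivity.
Qed.

Lemma ap_lim : is_lim_seq ap 0.
Proof.
  pose proof (HnzN N (le_n _)) as Hz. assert (Hp2 : 0 < p N ^ 2) by (apply pow2_gt_0; exact Hz).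
  apply lim_of_bound with (fun n => 27 / p N ^ 2 * TT V V0 p m n).
  { replace (Finite 0) with (Rbar_mult (27 / p N ^ 2) 0) by (simpl; f_equal; ring).
    apply is_lim_seq_scal_l. apply T_lim. }
  exists N. intros n Hn.
  destruct (Mbound V V0 p m N ap am 18 HmonN HnzN Hl1 wt_a n Hn) as [_ [_ [E _]]].
  rewrite (proj1 (fixed_a n Hn)). rewrite Rminus_0_r, Rminus_0_l, Rabs_Ropp.
  assert (HpN : p N ^ 2 <= p n ^ 2).
  { pose proof (HmonN N n (le_n _) Hn). rewrite <- (pow2_abs (p N)), <- (pow2_abs (p n)).
    pose proof (Rabs_pos (p N)). nra. }
  rewrite Rabs_mult, (Rabs_pos_eq (p n ^ 2)) in E by lra.
  apply Rmult_le_reg_l with (p N ^ 2). exact Hp2.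
  replace (p N ^ 2 * (27 / p N ^ 2 * TT V V0 p m n)) with (3/2 * 18 * TT V V0 p m n) by (field; lra).
  eapply Rle_trans. 2: exact E. apply Rmult_le_compat_r. apply Rabs_pos. exact HpN.
Qed.

Lemma am_lim : is_lim_seq am 1.
Proof.
  apply lim_of_bound with (fun n => 27 * TT V V0 p m n).
  { replace (Finite 0) with (Rbar_mult 27 0) by (simpl; f_equal; ring).
    apply is_lim_seq_scal_l. apply T_lim. }
  exists N. intros n Hn.
  destruct (Mbound V V0 p m N ap am 18 HmonN HnzN Hl1 wt_a n Hn) as [_ [_ [_ E]]].
  rewrite (proj2 (fixed_a n Hn)). replace (1 - Mm V V0 p m ap am n - 1) with (- Mm V V0 p m ap am n) by ring.
  rewrite Rabs_Ropp. lra.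
Qed.

Lemma r_bound n : (N <= n)%nat -> Rabs (psi0 n - m n) <= 46 * hatpsi m n * TT V V0 p m n.
Proof.
  intro Hn. destruct (exa n Hn) as [E1 E2].
  pose proof (hat_M_bound _ _ 18 n Hn ltac:(lra) E1 a_hat (fun i Hi => wt_m_le _ _ _ _ (wt_a i Hi))) as H1.
  destruct (Mbound V V0 p m N ap am 18 HmonN HnzN Hl1 wt_a n Hn) as [_ [_ [_ E]]].
  destruct (fixed_a n Hn) as [F1 F2].
  unfold psi0. rewrite F1, F2.
  replace ((0 - Mp V V0 p m ap am n) * p n + (1 - Mm V V0 p m ap am n) * m n - m n) with
    (- (p n * Mp V V0 p m ap am n) + - (Mm V V0 p m ap am n * m n)) by ring.
  eapply Rle_trans. apply Rabs_triang. rewrite !Rabs_Ropp, (Rabs_mult (Mm _ _ _ _ _ _ n)).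
  pose proof (hat_ge n n (le_n _)). pose proof (Rabs_pos (m n)). pose proof (Rabs_pos (Mm V V0 p m ap am n)).
  assert (Rabs (Mm V V0 p m ap am n) * Rabs (m n) <= 3/2 * 18 * TT V V0 p m n * hatpsi m n).
  { apply Rmult_le_compat; lra. }
  lra.
Qed.

Lemma uniq_fixed (Xp Xm Yp Ym : nat -> R) (BX BY : R) :
  (forall n, (N <= n)%nat -> wt p Xp Xm n <= BX) ->
  (forall n, (N <= n)%nat -> wt p Yp Ym n <= BY) ->
  fixed_eq V V0 p m N Xp Xm -> fixed_eq V V0 p m N Yp Ym ->
  forall n, (N <= n)%nat -> Xp n = Yp n /\ Xm n = Ym n.
Proof.
  intros HX HY FX FY.
  set (Dp := fun k => Xp k - Yp k). set (Dm := fun k => Xm k - Ym k).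
  assert (Heq : forall n, (N <= n)%nat -> wt p Dp Dm n = wt p (Mp V V0 p m Dp Dm) (Mm V V0 p m Dp Dm) n).
  { intros n Hn. destruct (MB _ _ _ HX n Hn) as [A1 [A2 _]]. destruct (MB _ _ _ HY n Hn) as [B1 [B2 _]].
    destruct (M_lin V V0 p m Xp Xm Yp Ym n A1 A2 B1 B2) as [L1 L2].
    destruct (FX n Hn) as [X1 X2]. destruct (FY n Hn) as [Y1 Y2].
    unfold wt, Dp, Dm. rewrite <- L1, <- L2, X1, X2, Y1, Y2.
    replace (0 - Mp V V0 p m Xp Xm n - (0 - Mp V V0 p m Yp Ym n)) with (- (Mp V V0 p m Xp Xm n - Mp V V0 p m Yp Ym n)) by ring.
    replace (1 - Mm V V0 p m Xp Xm n - (1 - Mm V V0 p m Yp Ym n)) with (- (Mm V V0 p m Xp Xm n - Mm V V0 p m Yp Ym n)) by ring.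
    rewrite Ropp_mult_distr_r_reverse, !Rabs_Ropp. reflexivity. }
  assert (Hj : forall j n, (N <= n)%nat -> wt p Dp Dm n <= (BX + BY) * (/2)^j).
  { induction j as [|j IH]; intros n Hn.
    - simpl. rewrite Rmult_1_r. eapply Rle_trans. apply wt_sub. pose proof (HX n Hn). pose proof (HY n Hn). lra.
    - rewrite Heq by exact Hn. destruct (MB _ _ _ IH n Hn) as [_ [_ [_ [_ C]]]].
      change ((/2)^(S j)) with (/2 * (/2)^j). lra. }
  intros n Hn.
  assert (H0 : wt p Dp Dm n <= 0).
  { assert (Hl := is_lim_seq_le (fun _ => wt p Dp Dm n) (fun j => (BX + BY) * (/2)^j) (wt p Dp Dm n) 0
      (fun j => Hj j n Hn) (is_lim_seq_const _) (lim_geom_c _)). exact Hl. }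
  pose proof (wt_nonneg p Dp Dm n). unfold wt, Dp, Dm in *.
  pose proof (Rabs_pos (p n ^ 2 * (Xp n - Yp n))). pose proof (Rabs_pos (Xm n - Ym n)).
  assert (Z1 : Rabs (p n ^ 2 * (Xp n - Yp n)) = 0) by lra.
  assert (Z2 : Rabs (Xm n - Ym n) = 0) by lra.
  apply Rabs_eq_0 in Z1. apply Rabs_eq_0 in Z2.
  apply Rmult_integral in Z1. destruct Z1 as [Z1|Z1].
  - exfalso. apply (pow_nonzero (p n) 2 (HnzN n Hn)). exact Z1.
  - split; lra.
Qed.

End Fixed.

End Main.

Theorem theorem2 (V V0 phip phim : nat -> R)
  (Hsolp : is_sol V0 phip) (Hsolm : is_sol V0 phim)
  (Hbasis : W phip phim <> 0)
  (Hlim : is_lim_seq phim 0)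
  (Hmono : exists n0 : nat, forall n m : nat, (n0 <= n)%nat -> (n <= m)%nat ->
             Rabs (phip n) <= Rabs (phip m))
  (Hl1 : ex_series (fun n => Rabs (beta V V0 phip phim n *
                                    (1 + (Rabs (phip n * phim n)) ^ 2)))) :
  (exists N0 : nat, forall N : nat, (N0 <= N)%nat ->
      is_contraction_on_B V V0 phip phim N) /\
  (exists psi : nat -> R,
      is_sol V psi /\
      (exists (N : nat) (ap am : nat -> R), good_coeffs V V0 phip phim psi N ap am) /\
      (forall psi' : nat -> R, is_sol V psi' ->
         (exists (N : nat) (ap am : nat -> R), good_coeffs V V0 phip phim psi' N ap am) ->
         forall n : nat, psi' n = psi n) /\
      (exists r : nat -> R, is_lim_seq r 0 /\
         forall n : nat, (1 <= n)%nat -> psi n = phim n + r n * hatpsi phim n)).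
Proof.
  destruct Hmono as [n0 Hm0].
  assert (Hg : ex_series (gg V V0 phip phim)) by exact Hl1.
  assert (HN1 : exists N1, (n0 <= N1)%nat /\ forall n, (N1 <= n)%nat -> phip n <> 0).
  { destruct (Req_dec (phip n0) 0) as [E|E].
    - assert (E2 : phip (S n0) <> 0).
      { intro E2. apply Hbasis. rewrite <- (Wr_const V0 phip phim Hsolp Hsolm n0). unfold Wr.
        rewrite E, E2. ring. }
      exists (S n0). split. lia. intros n Hn Hz. pose proof (Hm0 (S n0) n ltac:(lia) Hn).
      rewrite Hz, Rabs_R0 in H. pose proof (Rabs_pos_lt _ E2). lra.
    - exists n0. split. lia. intros n Hn Hz. pose proof (Hm0 n0 n (le_n _) Hn).
      rewrite Hz, Rabs_R0 in H. pose proof (Rabs_pos_lt _ E). lra. }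
  destruct HN1 as [N1 [HN1a HN1b]].
  pose proof (T_lim V V0 phip phim Hg) as HT. apply is_lim_seq_spec in HT.
  assert (H6 : 0 < 1/6) by lra.
  destruct (HT (mkposreal (1/6) H6)) as [N2 HN2].
  set (N0 := max N1 N2).
  assert (Hyps : forall N, (N0 <= N)%nat ->
    (forall n k, (N <= n)%nat -> (n <= k)%nat -> Rabs (phip n) <= Rabs (phip k)) /\
    (forall n, (N <= n)%nat -> phip n <> 0) /\
    (forall n, (N <= n)%nat -> TT V V0 phip phim n <= 1/6)).
  { intros N HN. split; [|split].
    - intros n k Hn Hk. apply Hm0; lia.
    - intros n Hn. apply HN1b. lia.
    - intros n Hn. specialize (HN2 n ltac:(lia)). simpl in HN2. rewrite Rminus_0_r in HN2.
      pose proof (Rle_abs (TT V V0 phip phim n)). lra. }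
  split.
  { exists N0. intros N HN. destruct (Hyps N HN) as [A [B C]].
    exact (contraction V V0 phip phim Hg N A B C). }
  destruct (Hyps N0 (le_n _)) as [A [B C]].
  destruct (ext_sol V N0 (psi0 V V0 phip phim) (psi0_sol V V0 phip phim Hsolp Hsolm Hbasis Hg N0 A B C))
    as [psi [Hs Hagree]].
  pose proof (fixed_a V V0 phip phim Hg N0 A B C) as Fa.
  pose proof (wt_a V V0 phip phim Hg N0 A B C) as Wa.
  exists psi. split; [exact Hs|]. split.
  { exists N0, (ap V V0 phip phim), (am V V0 phip phim). split; [|split; [|split; [|split]]].
    - exists 18. exact Wa.
    - exact Fa.
    - intros n Hn. rewrite Hagree by exact Hn. unfold psi0. reflexivity.
    - exact (ap_lim V V0 phip phim Hg N0 A B C).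
    - exact (am_lim V V0 phip phim Hg N0 A B C). }
  split.
  { intros psi' Hs' [N' [ap' [am' [[B' HB'] [G2 [G3 _]]]]]].
    set (N'' := max N0 N').
    destruct (Hyps N'' ltac:(lia)) as [A2 [B2 C2]].
    assert (Hu := uniq_fixed V V0 phip phim Hg N'' A2 B2 C2 (ap V V0 phip phim) (am V V0 phip phim) ap' am' 18 B'
      (fun n Hn => Wa n ltac:(lia)) (fun n Hn => HB' n ltac:(lia))
      (fun n Hn => Fa n ltac:(lia)) (fun n Hn => G2 n ltac:(lia))).
    apply (back_uniq V psi' psi N'' Hs' Hs). intros n Hn.
    rewrite G3 by lia. rewrite Hagree by lia. unfold psi0.
    destruct (Hu n Hn) as [E1 E2]. rewrite E1, E2. ring. }
  exists (fun n => (psi n - phim n) / hatpsi phim n). split.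
  - apply lim_of_bound with (fun n => 46 * TT V V0 phip phim n).
    { replace (Finite 0) with (Rbar_mult 46 0) by (simpl; f_equal; ring).
      apply is_lim_seq_scal_l. apply T_lim. exact Hg. }
    exists N0. intros n Hn. rewrite Rminus_0_r. rewrite Hagree by exact Hn.
    pose proof (hat_pos V0 phip phim Hsolp Hsolm Hbasis Hlim n) as Hh.
    pose proof (r_bound V V0 phip phim Hsolp Hsolm Hbasis Hlim Hg N0 A B C n Hn) as Hr.
    unfold Rdiv. rewrite Rabs_mult, Rabs_inv, (Rabs_pos_eq (hatpsi phim n)) by lra.
    apply Rmult_le_reg_r with (hatpsi phim n). exact Hh.
    rewrite Rmult_assoc, Rinv_l, Rmult_1_r by lra. lra.
  - intros n _. pose proof (hat_pos V0 phip phim Hsolp Hsolm Hbasis Hlim n) as Hh. field. lra.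
Qed.
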